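(* Let $\alpha_1\in(0,1)$, $\rho_1,\rho_2>0$, $u_1,u_2$ be smooth functions of $(t,x)$, and let $\zeta_1,\dots,\zeta_5$ be given functions. Set \[ u_I=u,\qquad p_I=\frac{\alpha_2\rho_2p_1+\alpha_1\rho_1p_2}{\rho}. \] Then $(\alpha_1,\rho_1,\rho_2,u_1,u_2)$ solves the barotropic Baer–Nunziato system \begin{align*} &\partial_t\alpha_1+u_I\partial_x\alpha_1=\zeta_1,\quad \partial_t(\alpha_1\rho_1)+\partial_x(\alpha_1\rho_1u_1)=\zeta_2,\quad \partial_t(\alpha_2\rho_2)+\partial_x(\alpha_2\rho_2u_2)=\zeta_3,\\ &\partial_t(\alpha_1\rho_1u_1)+\partial_x(\alpha_1\rho_1u_1^2+\alpha_1p_1)-p_I\partial_x\alpha_1=\zeta_4,\quad \partial_t(\alpha_2\rho_2u_2)+\partial_x(\alpha_2\rho_2u_2^2+\alpha_2p_2)-p_I\partial_x\alpha_2=\zeta_5 \end{align*} if and only if it solves the conservative SHTC system \begin{align*} &\partial_t(\alpha_1\rho)+\partial_x(\alpha_1\rho u)=\xi_1,\quad \partial_t(\alpha_1\rho_1)+\partial_x(\alpha_1\rho_1u_1)=\xi_2,\quad \partial_t\rho+\partial_x(\rho u)=\xi_3,\\ &\partial_t(\alpha_1\rho_1u_1+\alpha_2\rho_2u_2)+\partial_x(\alpha_1\rho_1u_1^2+\alpha_2\rho_2u_2^2+\alpha_1p_1+\alpha_2p_2)=\xi_4,\\ &\partial_t(u_1-u_2)+\partial_x\Big(\tfrac12u_1^2-\tfrac12u_2^2+\Psi_1(\rho_1)-\Psi_2(\rho_2)\Big)=\xi_5,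 \end{align*} with $\xi=B\zeta$, where \[ B=\begin{pmatrix} \rho & \alpha_1 & \alpha_1 & 0 & 0\\ 0 & 1 & 0 & 0 & 0\\ 0 & 1 & 1 & 0 & 0\\ 0 & 0 & 0 & 1 & 1\\ 0 & -\frac{u_1}{\alpha_1\rho_1} & \frac{u_2}{\alpha_2\rho_2} & \frac{1}{\alpha_1\rho_1} & -\frac{1}{\alpha_2\rho_2} \end{pmatrix}. \] Moreover $B$ is invertible with inverse \[ C=\begin{pmatrix} \frac1\rho & 0 & -\frac{\alpha_1}{\rho} & 0 & 0\\ 0 & 1 & 0 & 0 & 0\\ 0 & -1 & 1 & 0 & 0\\ 0 & c_2u_1+c_1u_2 & -c_1u_2 & c_1 & c_1c_2\rho\\ 0 & -(c_2u_1+c_1u_2) & c_1u_2 & c_2 & -c_1c_2\rho \end{pmatrix}, \] so equivalently $\zeta=C\xi$.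
   Context: For $i=1,2$, $p_i:(0,\infty)\to\mathbb{R}$ is smooth with $p_i'>0$; $\varphi_i$ is an antiderivative of $\rho\mapsto p_i(\rho)/\rho^2$ and $\Psi_i(\rho)=\varphi_i(\rho)+p_i(\rho)/\rho$ (so $\Psi_i'=p_i'/\rho$). Notation: $\alpha_2=1-\alpha_1$, $\rho=\alpha_1\rho_1+\alpha_2\rho_2$, $c_i=\alpha_i\rho_i/\rho$, $u=c_1u_1+c_2u_2$, $p_i=p_i(\rho_i)$. *)

(* Defs.v *)
From Stdlib Require Import Reals.
From Coquelicot Require Import Coquelicot.
From mathcomp Require Import all_boot all_algebra.
From mathcomp Require Import Rstruct.

Set Implicit Arguments.
Unset Strict Implicit.
Unset Printing Implicit Defensive.

Local Open Scope R_scope.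

Definition field := R -> R -> R.

Definition dt (f : field) : field := fun t x => Derive (fun s => f s x) t.
Definition dx (f : field) : field := fun t x => Derive (fun y => f t y) x.

Fixpoint iter_partial (ds : list bool) (f : field) : field :=
  match ds with
  | nil => f
  | cons d ds' => if d then dt (iter_partial ds' f) else dx (iter_partial ds' f)
  end.

Definition smooth2 (f : field) : Prop :=
  forall (ds : list bool) (t x : R),
    ex_derive (fun s => iter_partial ds f s x) t /\
    ex_derive (fun y => iter_partial ds f t y) x.

Definition pressure_law (p : R -> R) : Prop :=
  (forall n r, 0 < r -> ex_derive_n p n r) /\
  (forall r, 0 < r -> 0 < Derive p r).

Definition antider_p (p phi : R -> R) : Prop :=
  forall r, 0 < r -> is_derive phi r (p r / r ^ 2).

Definition Psi (p phi : R -> R) (r : R) : R := phi r + p r / r.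

Definition mx_of_rows (rows : list (list R)) : 'M[R]_5 :=
  \matrix_(i < 5, j < 5) List.nth j (List.nth i rows nil) 0.

Definition Bmat (a1 r1 r2 v1 v2 : R) : 'M[R]_5 :=
  let a2 := 1 - a1 in
  let rho := a1 * r1 + a2 * r2 in
  mx_of_rows
   [:: [:: rho; a1; a1; 0; 0];
       [:: 0; 1; 0; 0; 0];
       [:: 0; 1; 1; 0; 0];
       [:: 0; 0; 0; 1; 1];
       [:: 0; - (v1 / (a1 * r1)); v2 / (a2 * r2); 1 / (a1 * r1); - (1 / (a2 * r2))]].

Definition Cmat (a1 r1 r2 v1 v2 : R) : 'M[R]_5 :=
  let a2 := 1 - a1 in
  let rho := a1 * r1 + a2 * r2 in
  let c1 := a1 * r1 / rho in
  let c2 := a2 * r2 / rho in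
  mx_of_rows
   [:: [:: 1 / rho; 0; - (a1 / rho); 0; 0];
       [:: 0; 1; 0; 0; 0];
       [:: 0; -1; 1; 0; 0];
       [:: 0; c2 * v1 + c1 * v2; - (c1 * v2); c1; c1 * c2 * rho];
       [:: 0; - (c2 * v1 + c1 * v2); c1 * v2; c2; - (c1 * c2 * rho)]].

Definition col5 (z1 z2 z3 z4 z5 : R) : 'cV[R]_5 :=
  \col_(i < 5) List.nth i [:: z1; z2; z3; z4; z5] 0.

(* components are numbered 0..4 (paper's xi_1..xi_5) *)
Definition xi_comp (a1 r1 r2 u1 u2 z1 z2 z3 z4 z5 : field) (i : nat) : field :=
  fun t x =>
    ((Bmat (a1 t x) (r1 t x) (r2 t x) (u1 t x) (u2 t x)
      *m col5 (z1 t x) (z2 t x) (z3 t x) (z4 t x) (z5 t x))%R) (inord i) ord0.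

(* Main.v *)
Require Import Defs.
From Stdlib Require Import Reals Lra.
From Coquelicot Require Import Coquelicot.
From mathcomp Require Import all_boot all_algebra.
From mathcomp Require Import Rstruct.
Import GRing.Theory.

Ltac isatom f := lazymatch f with
  | (fun s => ?g s ?z) => idtac
  | (fun s => ?g ?z s) => idtac
  | (fun s => ?g s) => idtac
  | _ => fail end.

Ltac dstep := match goal with |- context [Derive ?f ?y] =>
  tryif isatom f then fail else
  let E := fresh "E" in
  eassert (E : Derive f y = _) by
    (apply is_derive_unique; auto_derive; [repeat split; auto | reflexivity]);
  rewrite E; clear E end.


Definition bB (a r1 r2 v1 v2 z1 z2 z3 z4 z5 : R) (i : nat) : R :=
  match i with
  | 0%nat => (a * r1 + (1 - a) * r2) * z1 + a * z2 + a * z3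
  | 1%nat => z2
  | 2%nat => z2 + z3
  | 3%nat => z4 + z5
  | _ => - (v1 / (a * r1)) * z2 + v2 / ((1 - a) * r2) * z3 + 1 / (a * r1) * z4
         - (1 / ((1 - a) * r2)) * z5
  end.

Lemma xiE a1 r1 r2 u1 u2 z1 z2 z3 z4 z5 (i : nat) t x : (i < 5)%nat ->
  xi_comp a1 r1 r2 u1 u2 z1 z2 z3 z4 z5 i t x =
  bB (a1 t x) (r1 t x) (r2 t x) (u1 t x) (u2 t x) (z1 t x) (z2 t x) (z3 t x) (z4 t x) (z5 t x) i.
Proof.
move=> Hi; rewrite /xi_comp !mxE !big_ord_recl big_ord0 !mxE /=.
have -> : (inord i : 'I_5) = Ordinal Hi by apply/val_inj; rewrite /= inordK.
case: i Hi => [|[|[|[|[|i]]]]] Hi //=; rewrite -?RplusE -?RmultE -?RoppE /= -?R0E; ring.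
Qed.

Lemma lin1 a r1 r2 v1 v2 l1 l2 l3 l4 l5 z1 z2 z3 z4 z5 s1 s2 s3 s4 s5 :
  (l1 = z1 /\ l2 = z2 /\ l3 = z3 /\ l4 = z4 /\ l5 = z5) ->
  s1 = bB a r1 r2 v1 v2 l1 l2 l3 l4 l5 0 ->
  s2 = bB a r1 r2 v1 v2 l1 l2 l3 l4 l5 1 ->
  s3 = bB a r1 r2 v1 v2 l1 l2 l3 l4 l5 2 ->
  s4 = bB a r1 r2 v1 v2 l1 l2 l3 l4 l5 3 ->
  s5 = bB a r1 r2 v1 v2 l1 l2 l3 l4 l5 4 ->
  (s1 = bB a r1 r2 v1 v2 z1 z2 z3 z4 z5 0 /\
   s2 = bB a r1 r2 v1 v2 z1 z2 z3 z4 z5 1 /\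
   s3 = bB a r1 r2 v1 v2 z1 z2 z3 z4 z5 2 /\
   s4 = bB a r1 r2 v1 v2 z1 z2 z3 z4 z5 3 /\
   s5 = bB a r1 r2 v1 v2 z1 z2 z3 z4 z5 4).
Proof. by move=> [-> [-> [-> [-> ->]]]] -> -> -> -> ->. Qed.

Lemma lin2 a r1 r2 v1 v2 l1 l2 l3 l4 l5 z1 z2 z3 z4 z5 s1 s2 s3 s4 s5 :
  0 < a < 1 -> 0 < r1 -> 0 < r2 ->
  (s1 = bB a r1 r2 v1 v2 z1 z2 z3 z4 z5 0 /\
   s2 = bB a r1 r2 v1 v2 z1 z2 z3 z4 z5 1 /\
   s3 = bB a r1 r2 v1 v2 z1 z2 z3 z4 z5 2 /\
   s4 = bB a r1 r2 v1 v2 z1 z2 z3 z4 z5 3 /\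
   s5 = bB a r1 r2 v1 v2 z1 z2 z3 z4 z5 4) ->
  s1 = bB a r1 r2 v1 v2 l1 l2 l3 l4 l5 0 ->
  s2 = bB a r1 r2 v1 v2 l1 l2 l3 l4 l5 1 ->
  s3 = bB a r1 r2 v1 v2 l1 l2 l3 l4 l5 2 ->
  s4 = bB a r1 r2 v1 v2 l1 l2 l3 l4 l5 3 ->
  s5 = bB a r1 r2 v1 v2 l1 l2 l3 l4 l5 4 ->
  (l1 = z1 /\ l2 = z2 /\ l3 = z3 /\ l4 = z4 /\ l5 = z5).
Proof.
move=> Ha Hr1 Hr2 [H1 [H2 [H3 [H4 H5]]]] E1 E2 E3 E4 E5; cbv [bB] in *.
have h1 : a * r1 > 0 by nra.
have h2 : (1 - a) * r2 > 0 by nra.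
have h3 : a * r1 + (1 - a) * r2 > 0 by nra.
have k1p : 0 < 1 / (a * r1) by apply: Rdiv_lt_0_compat; lra.
have k2p : 0 < 1 / ((1 - a) * r2) by apply: Rdiv_lt_0_compat; lra.
move: H1 H5 E1 E5 k1p k2p h3.
set rho := a * r1 + (1 - a) * r2.
set k1 := 1 / (a * r1). set k2 := 1 / ((1 - a) * r2).
set w1 := v1 / (a * r1). set w2 := v2 / ((1 - a) * r2).
clearbody rho k1 k2 w1 w2 => H1 H5 E1 E5 k1p k2p h3.
have e2 : l2 = z2 by lra.
have e3 : l3 = z3 by lra.
subst l2 l3.
have e1 : l1 = z1.
  have : rho * (l1 - z1) = 0 by nra.
  move/Rmult_integral => [|]; lra.
have e4 : l4 = z4.
  have : (l4 - z4) * (k1 + k2) = 0 by nra.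
  move/Rmult_integral => [|]; lra.
repeat split; nra.
Qed.

Ltac idents t x :=
  cbv [bB dt dx Psi];
  repeat dstep;
  field; repeat split; auto.

Local Open Scope R_scope.


Lemma BC a1 r1 r2 v1 v2 : 0 < a1 < 1 -> 0 < r1 -> 0 < r2 ->
  (Bmat a1 r1 r2 v1 v2 *m Cmat a1 r1 r2 v1 v2 = 1 :> 'M[R]_5)%R /\
  (Cmat a1 r1 r2 v1 v2 *m Bmat a1 r1 r2 v1 v2 = 1 :> 'M[R]_5)%R.
Proof.
move=> Ha Hr1 Hr2.
have h1 : a1 * r1 <> 0 by nra.
have h2 : (1 - a1) * r2 <> 0 by nra.
have h3 : a1 * r1 + (1 - a1) * r2 <> 0 by nra.
have ha : a1 <> 0 by lra.
split; apply/matrixP => i j; rewrite !mxE !big_ord_recl big_ord0 !mxE /=;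
case: i => [[|[|[|[|[|i]]]]] Hi] //; case: j => [[|[|[|[|[|j]]]]] Hj] //=;
rewrite -?RplusE -?RmultE -?RoppE /= ?mulr1n ?mulr0n -?R0E -?R1E; idtac. all: try (field; repeat split; (lra || nra)). 
Qed.

Theorem mainTheorem5
  (p1 p2 phi1 phi2 : R -> R)
  (Hp1 : pressure_law p1) (Hp2 : pressure_law p2)
  (Hphi1 : antider_p p1 phi1) (Hphi2 : antider_p p2 phi2)
  (a1 r1 r2 u1 u2 : field)
  (Ha1 : forall t x, 0 < a1 t x < 1)
  (Hr1 : forall t x, 0 < r1 t x) (Hr2 : forall t x, 0 < r2 t x)
  (Sa1 : smooth2 a1) (Sr1 : smooth2 r1) (Sr2 : smooth2 r2)
  (Su1 : smooth2 u1) (Su2 : smooth2 u2)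
  (z1 z2 z3 z4 z5 : field) :
  let a2 : field := fun t x => 1 - a1 t x in
  let rho : field := fun t x => a1 t x * r1 t x + a2 t x * r2 t x in
  let c1 : field := fun t x => a1 t x * r1 t x / rho t x in
  let c2 : field := fun t x => a2 t x * r2 t x / rho t x in
  let u : field := fun t x => c1 t x * u1 t x + c2 t x * u2 t x in
  let P1 : field := fun t x => p1 (r1 t x) in
  let P2 : field := fun t x => p2 (r2 t x) in
  let uI : field := u in
  let pI : field := fun t x =>
    (a2 t x * r2 t x * P1 t x + a1 t x * r1 t x * P2 t x) / rho t x in
  let xi := xi_comp a1 r1 r2 u1 u2 z1 z2 z3 z4 z5 in
  ((forall t x,
      dt a1 t x + uI t x * dx a1 t x = z1 t x /\
      dt (fun t x => a1 t x * r1 t x) t x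
        + dx (fun t x => a1 t x * r1 t x * u1 t x) t x = z2 t x /\
      dt (fun t x => a2 t x * r2 t x) t x
        + dx (fun t x => a2 t x * r2 t x * u2 t x) t x = z3 t x /\
      dt (fun t x => a1 t x * r1 t x * u1 t x) t x
        + dx (fun t x => a1 t x * r1 t x * u1 t x ^ 2 + a1 t x * P1 t x) t x
        - pI t x * dx a1 t x = z4 t x /\
      dt (fun t x => a2 t x * r2 t x * u2 t x) t x
        + dx (fun t x => a2 t x * r2 t x * u2 t x ^ 2 + a2 t x * P2 t x) t x
        - pI t x * dx a2 t x = z5 t x)
   <->
   (forall t x,
      dt (fun t x => a1 t x * rho t x) t x
        + dx (fun t x => a1 t x * rho t x * u t x) t x = xi 0%nat t x /\
      dt (fun t x => a1 t x * r1 t x) t x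
        + dx (fun t x => a1 t x * r1 t x * u1 t x) t x = xi 1%nat t x /\
      dt rho t x + dx (fun t x => rho t x * u t x) t x = xi 2%nat t x /\
      dt (fun t x => a1 t x * r1 t x * u1 t x + a2 t x * r2 t x * u2 t x) t x
        + dx (fun t x => a1 t x * r1 t x * u1 t x ^ 2 + a2 t x * r2 t x * u2 t x ^ 2
                         + a1 t x * P1 t x + a2 t x * P2 t x) t x = xi 3%nat t x /\
      dt (fun t x => u1 t x - u2 t x) t x
        + dx (fun t x => / 2 * u1 t x ^ 2 - / 2 * u2 t x ^ 2
                         + Psi p1 phi1 (r1 t x) - Psi p2 phi2 (r2 t x)) t x
          = xi 4%nat t x))
  /\
  (forall t x,
     let B := Bmat (a1 t x) (r1 t x) (r2 t x) (u1 t x) (u2 t x) in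
     let C := Cmat (a1 t x) (r1 t x) (r2 t x) (u1 t x) (u2 t x) in
     (B *m C = 1 :> 'M[R]_5)%R /\ (C *m B = 1 :> 'M[R]_5)%R).
Proof.
move=> a2 rho c1 c2 u P1 P2 uI pI xi.
subst a2 rho c1 c2 u P1 P2 uI pI xi.
split; last first.
  move=> t x /=; apply: BC; auto.
split.
- move=> H t x; rewrite !xiE //.
  have dat := proj1 (Sa1 nil t x); have dax := proj2 (Sa1 nil t x).
  have dr1t := proj1 (Sr1 nil t x); have dr1x := proj2 (Sr1 nil t x).
  have dr2t := proj1 (Sr2 nil t x); have dr2x := proj2 (Sr2 nil t x).
  have du1t := proj1 (Su1 nil t x); have du1x := proj2 (Su1 nil t x).
  have du2t := proj1 (Su2 nil t x); have du2x := proj2 (Su2 nil t x).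
  cbn [iter_partial] in *.
  have dp1 : ex_derive p1 (r1 t x) := (proj1 Hp1) 1%nat _ (Hr1 t x).
  have dp2 : ex_derive p2 (r2 t x) := (proj1 Hp2) 1%nat _ (Hr2 t x).
  have dphi1 : ex_derive phi1 (r1 t x) := ex_intro _ _ (Hphi1 _ (Hr1 t x)).
  have dphi2 : ex_derive phi2 (r2 t x) := ex_intro _ _ (Hphi2 _ (Hr2 t x)).
  have Dphi1 := is_derive_unique _ _ _ (Hphi1 _ (Hr1 t x)).
  have Dphi2 := is_derive_unique _ _ _ (Hphi2 _ (Hr2 t x)).
  have nr1 : r1 t x <> 0 by have := Hr1 t x; lra.
  have nr2 : r2 t x <> 0 by have := Hr2 t x; lra.
  have na1 : a1 t x <> 0 by have := Ha1 t x; lra.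
  have na2 : 1 - a1 t x <> 0 by have := Ha1 t x; lra.
  have nrho : a1 t x * r1 t x + (1 - a1 t x) * r2 t x <> 0
     by have := Ha1 t x; have := Hr1 t x; have := Hr2 t x; nra.
  eapply lin1; first exact (H t x).
  all: cbv [bB dt dx Psi]; repeat dstep.
  all: rewrite ?Dphi1 ?Dphi2; try (field; repeat split; auto).
- move=> H t x; have := H t x; rewrite !xiE // => Ht.
  have dat := proj1 (Sa1 nil t x); have dax := proj2 (Sa1 nil t x).
  have dr1t := proj1 (Sr1 nil t x); have dr1x := proj2 (Sr1 nil t x).
  have dr2t := proj1 (Sr2 nil t x); have dr2x := proj2 (Sr2 nil t x).
  have du1t := proj1 (Su1 nil t x); have du1x := proj2 (Su1 nil t x).
  have du2t := proj1 (Su2 nil t x); have du2x := proj2 (Su2 nil t x).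
  cbn [iter_partial] in *.
  have dp1 : ex_derive p1 (r1 t x) := (proj1 Hp1) 1%nat _ (Hr1 t x).
  have dp2 : ex_derive p2 (r2 t x) := (proj1 Hp2) 1%nat _ (Hr2 t x).
  have dphi1 : ex_derive phi1 (r1 t x) := ex_intro _ _ (Hphi1 _ (Hr1 t x)).
  have dphi2 : ex_derive phi2 (r2 t x) := ex_intro _ _ (Hphi2 _ (Hr2 t x)).
  have Dphi1 := is_derive_unique _ _ _ (Hphi1 _ (Hr1 t x)).
  have Dphi2 := is_derive_unique _ _ _ (Hphi2 _ (Hr2 t x)).
  have nr1 : r1 t x <> 0 by have := Hr1 t x; lra.
  have nr2 : r2 t x <> 0 by have := Hr2 t x; lra.
  have na1 : a1 t x <> 0 by have := Ha1 t x; lra.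
  have na2 : 1 - a1 t x <> 0 by have := Ha1 t x; lra.
  have nrho : a1 t x * r1 t x + (1 - a1 t x) * r2 t x <> 0
     by have := Ha1 t x; have := Hr1 t x; have := Hr2 t x; nra.
  eapply lin2; [exact (Ha1 t x) | exact (Hr1 t x) | exact (Hr2 t x) | exact Ht | ..].
  all: cbv [bB dt dx Psi]; repeat dstep.
  all: rewrite ?Dphi1 ?Dphi2; try (field; repeat split; auto).
Qed.
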